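(* Let $\varphi : D \to C$ be a monic quiver homomorphism with $V(D)\neq\emptyset$. Then $\varphi$ is mono-essential if and only if the following conditions hold: (1) the vertex map $V(\varphi)$ is bijective; (2) if $\mathrm{edges}_D(v,w)\neq\emptyset$ for some $v,w\in V(D)$, then $E(\varphi)(\mathrm{edges}_D(v,w)) = \mathrm{edges}_C(V(\varphi)(v),V(\varphi)(w))$; (3) if $\mathrm{edges}_D(v,w)=\emptyset$ for some $v,w\in V(D)$, then $|\mathrm{edges}_C(V(\varphi)(v),V(\varphi)(w))|\le 1$.
   Context: A quiver is a quadruple $(V,E,\sigma,\tau)$ with $V,E$ sets and $\sigma,\tau : E \to V$ functions (source and target). A quiver homomorphism $\varphi: G \to H$ is a pair $(V(\varphi),E(\varphi))$ of functions on vertices and edges with $V(\varphi)\circ\sigma_G=\sigma_H\circ E(\varphi)$ and $V(\varphi)\circ\tau_G=\tau_H\circ E(\varphi)$; composition is componentwise. A homomorphism is monic (a monomorphism in the category of quivers) iff both its vertex and edge maps are injective. A monic homomorphism $\varphi : D \to C$ is mono-essential if for every quiver $A$ and homomorphism $\alpha : C\to A$, $\alpha\circ\varphi$ monic implies $\alpha$ monic. For a quiver $J$ and $v,w\in V(J)$, $\mathrm{edges}_J(v,w):=\sigma_J^{-1}(v)\cap\tau_J^{-1}(w)$. *)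

(* Defs.v *)
Set Implicit Arguments.

Record Quiver := mkQuiver {
  QV : Type;
  QE : Type;
  src : QE -> QV;
  tgt : QE -> QV }.

Record QHom (G H : Quiver) := mkQHom {
  vmap : QV G -> QV H;
  emap : QE G -> QE H;
  vmap_src : forall e, vmap (src G e) = src H (emap e);
  vmap_tgt : forall e, vmap (tgt G e) = tgt H (emap e) }.

Definition qcomp (G H K : Quiver) (b : QHom H K) (a : QHom G H) : QHom G K.
Proof.
  refine (@mkQHom G K (fun v => vmap b (vmap a v)) (fun e => emap b (emap a e)) _ _).
  - intro e. rewrite (vmap_src a e). apply (vmap_src b).
  - intro e. rewrite (vmap_tgt a e). apply (vmap_tgt b).
Defined.

Definition injective_fun (X Y : Type) (f : X -> Y) : Prop :=
  forall x y, f x = f y -> x = y.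
Definition surjective_fun (X Y : Type) (f : X -> Y) : Prop :=
  forall y, exists x, f x = y.
Definition bijective_fun (X Y : Type) (f : X -> Y) : Prop :=
  injective_fun f /\ surjective_fun f.

Definition monic (G H : Quiver) (a : QHom G H) : Prop :=
  injective_fun (vmap a) /\ injective_fun (emap a).

Definition mono_essential (D C : Quiver) (phi : QHom D C) : Prop :=
  monic phi /\
  forall (A : Quiver) (alpha : QHom C A), monic (qcomp alpha phi) -> monic alpha.

Arguments QV : clear implicits.
Definition edges (J : Quiver) (v w : QV J) (e : QE J) : Prop :=
  src J e = v /\ tgt J e = w.
Arguments edges : clear implicits.

(* Main.v *)
Require Import Defs.
From Stdlib Require Import Classical ClassicalEpsilon.

Lemma collapse_edge (D C : Quiver) (phi : QHom D C) (e0 e' : QE C) :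
  src C e' = src C e0 -> tgt C e' = tgt C e0 -> e' <> e0 ->
  (forall x, emap phi x <> e') -> ~ mono_essential phi.
Proof.
  intros Hs Ht Hne Himg [Hm Hme].
  set (A := @mkQuiver (QV C) (QE C) (src C) (tgt C)).
  set (f := fun x : QE C => if excluded_middle_informative (x = e') then e0 else x).
  assert (Hfs : forall e, (fun v : QV C => v) (src C e) = src A (f e)).
  { intro e; unfold f; simpl; destruct excluded_middle_informative; subst; auto. }
  assert (Hft : forall e, (fun v : QV C => v) (tgt C e) = tgt A (f e)).
  { intro e; unfold f; simpl; destruct excluded_middle_informative; subst; auto. }
  set (alpha := @mkQHom C A (fun v => v) f Hfs Hft).
  assert (H : monic (qcomp alpha phi)).
  { destruct Hm as [Hv He]; split; intros x y Hxy; simpl in *.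
    - auto.
    - apply He. unfold f in Hxy.
      destruct excluded_middle_informative as [E1|E1]; [exfalso; eapply Himg; eauto|].
      destruct excluded_middle_informative as [E2|E2]; [exfalso; eapply Himg; eauto|].
      auto. }
  destruct (Hme A alpha H) as [_ He]. apply Hne. apply He. simpl. unfold f.
  destruct excluded_middle_informative as [_|n]; [|congruence].
  destruct excluded_middle_informative as [E|_]; auto.
Qed.

Lemma collapse_vertex (D C : Quiver) (phi : QHom D C) (c : QV C) (d : QV D) :
  (forall x, vmap phi x <> c) -> ~ mono_essential phi.
Proof.
  intros Himg [Hm Hme].
  set (g := fun x : QV C => if excluded_middle_informative (x = c) then vmap phi d else x).
  set (A := @mkQuiver (QV C) (QE C) (fun e => g (src C e)) (fun e => g (tgt C e))).
  assert (Hfs : forall e, g (src C e) = src A ((fun e => e) e)) by reflexivity.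
  assert (Hft : forall e, g (tgt C e) = tgt A ((fun e => e) e)) by reflexivity.
  set (alpha := @mkQHom C A g (fun e => e) Hfs Hft).
  assert (H : monic (qcomp alpha phi)).
  { destruct Hm as [Hv He]; split; intros x y Hxy; simpl in *.
    - apply Hv. unfold g in Hxy.
      destruct excluded_middle_informative as [E1|E1]; [exfalso; eapply Himg; eauto|].
      destruct excluded_middle_informative as [E2|E2]; [exfalso; eapply Himg; eauto|].
      auto.
    - auto. }
  destruct (Hme A alpha H) as [Hv _].
  apply (Himg d). symmetry. apply Hv. simpl. unfold g.
  destruct excluded_middle_informative as [_|n]; [|congruence].
  destruct excluded_middle_informative as [E|_]; auto.
Qed.

Theorem mainTheorem4 (D C : Quiver) (phi : QHom D C) :
  monic phi -> inhabited (QV D) ->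
  (mono_essential phi <->
   (bijective_fun (vmap phi) /\
    (forall v w : QV D, (exists e, edges D v w e) ->
       forall e' : QE C, edges C (vmap phi v) (vmap phi w) e' <->
         exists e, edges D v w e /\ emap phi e = e') /\
    (forall v w : QV D, ~ (exists e, edges D v w e) ->
       forall e1 e2 : QE C, edges C (vmap phi v) (vmap phi w) e1 ->
         edges C (vmap phi v) (vmap phi w) e2 -> e1 = e2))).
Proof.
  intros Hm [d0]. split.
  - intro Hme. split; [|split].
    + split; [apply Hm|]. intro y.
      apply NNPP; intro Hn. apply (@collapse_vertex D C phi y d0); auto.
      intros x Hx; apply Hn; eauto.
    + intros v w [e [Hs Ht]] e'. split.
      * intros [Hs' Ht']. apply NNPP; intro Hn.
        destruct (classic (e' = emap phi e)) as [Eq|Neq].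
        { apply Hn; exists e; split; [split|]; auto. }
        apply (@collapse_edge D C phi (emap phi e) e'); auto.
        -- rewrite Hs', <- vmap_src, Hs; auto.
        -- rewrite Ht', <- vmap_tgt, Ht; auto.
        -- intros x Hx. apply Hn. exists x. split; auto.
           destruct Hm as [Hv _]. split; apply Hv.
           ++ rewrite vmap_src, Hx; auto.
           ++ rewrite vmap_tgt, Hx; auto.
      * intros [x [[Hs' Ht'] <-]]. split; [rewrite <- vmap_src, Hs'|rewrite <- vmap_tgt, Ht']; auto.
    + intros v w Hn e1 e2 [H1s H1t] [H2s H2t].
      apply NNPP; intro Hne.
      apply (@collapse_edge D C phi e1 e2); auto; try congruence.
      intros x Hx. apply Hn. exists x. destruct Hm as [Hv _]. split; apply Hv.
      * rewrite vmap_src, Hx; auto.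
      * rewrite vmap_tgt, Hx; auto.
  - intros [[Hinj Hsur] [H2 H3]]. split; [exact Hm|].
    intros A alpha [Hcv Hce]. simpl in Hcv, Hce.
    assert (Hav : injective_fun (vmap alpha)).
    { intros x y Hxy. destruct (Hsur x) as [a <-]. destruct (Hsur y) as [b <-].
      f_equal. apply Hcv; auto. }
    split; [exact Hav|].
    intros e1 e2 Heq.
    destruct (Hsur (src C e1)) as [v1 Hv1]. destruct (Hsur (tgt C e1)) as [w1 Hw1].
    destruct (Hsur (src C e2)) as [v2 Hv2]. destruct (Hsur (tgt C e2)) as [w2 Hw2].
    assert (v1 = v2).
    { apply Hcv. rewrite Hv1, Hv2, !vmap_src, Heq; auto. }
    assert (w1 = w2).
    { apply Hcv. rewrite Hw1, Hw2, !vmap_tgt, Heq; auto. }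
    subst v2 w2.
    destruct (classic (exists e, edges D v1 w1 e)) as [Hex|Hnex].
    + destruct (proj1 (H2 v1 w1 Hex e1) (conj (eq_sym Hv1) (eq_sym Hw1))) as [d1 [_ <-]].
      destruct (proj1 (H2 v1 w1 Hex e2) (conj (eq_sym Hv2) (eq_sym Hw2))) as [d2 [_ <-]].
      f_equal. apply Hce. exact Heq.
    + apply (H3 v1 w1 Hnex); split; symmetry; auto.
Qed.
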